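(* Let $J-CI=L^{(1)}\cdots L^{(p)}U$ be a Darboux factorization, and for $j=0,\ldots,p-1$ let $g^{(j)}_{k,s}$ be the entries (rows and columns indexed by $1,2,\ldots$) of $G^{(j)}=L^{(j+2)}\cdots L^{(p)}UL^{(1)}\cdots L^{(j)}$ (empty products being the identity). For each $j=0,1,\ldots,p$ let $\{\mathcal{L}^{(j)}_n\}$ be the dual sequence of $\{P^{(j)}_n\}$, with $\mathcal{L}^{(0)}_n=\mathcal{L}_n$ and $\mathcal{L}^{(j)}_{-1}:=0$. Then for each $j=0,\ldots,p-1$ and $n=0,1,\ldots$: $$\mathcal{L}^{(j+1)}_n=\mathcal{L}^{(j)}_n+\gamma_{n(p+1)+j+2}\,\mathcal{L}^{(j)}_{n+1},$$ $$(z-C)\mathcal{L}^{(j)}_n=\mathcal{L}^{(j+1)}_{n-1}+\sum_{s=0}^{p-1}g^{(j)}_{n+s+1,n+1}\,\mathcal{L}^{(j+1)}_{n+s},$$ and, for all $n\ge0$, $$(z-C)\mathcal{L}_n=\mathcal{L}^{(p)}_{n-1}-\frac{P_{n+1}(C)}{P_n(C)}\mathcal{L}^{(p)}_n.$$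
   Context: Fix $p\in\mathbb{N}$. Let $J=(a_{n,m})_{n,m\ge0}$ be an infinite matrix with $a_{n,n+1}=1$, $a_{n,m}=0$ for $m>n+1$ or $m<n-p$, and $a_{n+p,n}\neq0$ for all $n\ge0$. Define polynomials by $P_{-p}=\cdots=P_{-1}=0$, $P_0\equiv1$, $P_{n+1}(z)=(z-a_{n,n})P_n(z)-\sum_{i=1}^p a_{n,n-i}P_{n-i}(z)$ for $n\ge0$. Fix $C\in\mathbb{C}$ with $P_n(C)\neq0$ for all $n\ge1$. A Darboux factorization of $J-CI$ is a factorization $J-CI=L^{(1)}L^{(2)}\cdots L^{(p)}U$ where, indexing rows and columns by $1,2,\ldots$, $U$ is upper bidiagonal with $U_{k,k}=\gamma_{(k-1)(p+1)+1}$, $U_{k,k+1}=1$, and for $j=1,\ldots,p$, $L^{(j)}$ is lower bidiagonal with ones on the diagonal and $L^{(j)}_{k+1,k}=\gamma_{(k-1)(p+1)+j+1}\neq0$ for all $k\ge1$ (the $\gamma_i$ being complex numbers). Its Darboux transformations are $J^{(j)}=CI+L^{(j+1)}\cdots L^{(p)}UL^{(1)}\cdots L^{(j)}$, $j=1,\ldots,p$; also $J^{(0)}:=J$. Each $J^{(j)}$ is lower Hessenberg with ones on the superdiagonal, and $\{P^{(j)}_n\}_{n\ge0}$ denotes the unique sequence of polynomials with $P^{(j)}_0\equiv1$ such that $v^{(j)}(z)=(P^{(j)}_0(z),P^{(j)}_1(z),\ldots)^T$ satisfies $J^{(j)}v^{(j)}(z)=zv^{(j)}(z)$; $P^{(0)}_n=P_n$.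 For a sequence of polynomials $\{Q_n\}$ with $\deg Q_n=n$, its dual sequence is the sequence of linear functionals $\{\mathcal{M}_n\}$ on the polynomial space with $\mathcal{M}_j[Q_i]=\delta_{i,j}$. For a functional $\mu$, $(z-C)\mu$ is the functional $q\mapsto\mu[(z-C)q]$. *)

(* Defs.v *)
From HB Require Import structures.
From mathcomp Require Import all_boot all_order all_algebra.
Set Implicit Arguments. Unset Strict Implicit. Unset Printing Implicit Defensive.
Import Order.TTheory GRing.Theory Num.Theory.
Local Open Scope ring_scope.

Section Darboux.
Variable R : fieldType.

(* Infinite matrices, rows/columns indexed 0,1,2,... (the paper's row k
   of the factors, 1-based, is our row k-1). *)
Definition imx := nat -> nat -> R.

(* Product of infinite matrices A*B whose left factor satisfies
   A k m = 0 for m > k+1 (true for every left factor used below: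
   all are single bidiagonal factors, products are right-folded). *)
Definition imul (A B : imx) : imx :=
  fun k s => \sum_(m < k.+2) A k m * B m s.

Definition iid : imx := fun k s => (k == s)%:R.

Definition iprod (l : seq imx) : imx := foldr imul iid l.

(* U : U_{k,k} = gamma_{(k-1)(p+1)+1}, U_{k,k+1} = 1 (1-based). *)
Definition Umx (p : nat) (gam : nat -> R) : imx :=
  fun k s => if s == k then gam (k * p.+1 + 1)%N
             else if s == k.+1 then 1 else 0.

(* L^(j): ones on the diagonal, L_{k+1,k} = gamma_{(k-1)(p+1)+j+1} (1-based). *)
Definition Lmx (p : nat) (gam : nat -> R) (j : nat) : imx :=
  fun k s => if s == k then 1
             else if k == s.+1 then gam (s * p.+1 + j + 1)%N else 0.

Definition Lrange p gam (i len : nat) : seq imx :=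
  [seq Lmx p gam l | l <- iota i len].

Definition Gmx p gam (j : nat) : imx :=
  iprod (Lrange p gam j.+2 (p - j.+1) ++ Umx p gam :: Lrange p gam 1 j).

Definition Jmx p gam (C : R) (j : nat) : imx :=
  fun k s => C * (k == s)%:R
             + iprod (Lrange p gam j.+1 (p - j) ++ Umx p gam :: Lrange p gam 1 j) k s.

(* Polynomials P_n from the recurrence; Pl n = [:: P_n; P_(n-1); ...; P_0]. *)
Fixpoint Pl (p : nat) (a : imx) (n : nat) : seq {poly R} :=
  match n with
  | 0 => [:: 1]
  | n'.+1 => let s := Pl p a n' in
      (('X - (a n' n')%:P) * s`_0
        - \sum_(1 <= i < p.+1) a n' (n' - i)%N *: s`_i) :: s
  end.

Definition Prec (p : nat) (a : imx) (n : nat) : {poly R} := (Pl p a n)`_0.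

(* v(z) = (Q_0, Q_1, ...)^T satisfies H v(z) = z v(z), for H lower
   Hessenberg (H n m = 0 for m > n+1). *)
Definition eigen_seq (H : imx) (Q : nat -> {poly R}) : Prop :=
  Q 0%N = 1 /\ forall n, \sum_(m < n.+2) H n m *: Q m = 'X * Q n.

Definition lin_functional (f : {poly R} -> R) : Prop :=
  forall (c : R) (q r : {poly R}), f (c *: q + r) = c * f q + f r.

Definition dual_seq (Q : nat -> {poly R}) (M : nat -> {poly R} -> R) : Prop :=
  forall n, lin_functional (M n) /\ forall i, M n (Q i) = (i == n)%:R.

Definition zmC (C : R) (mu : {poly R} -> R) : {poly R} -> R :=
  fun q => mu (('X - C%:P) * q).

End Darboux.

(* Main.v *)
Require Import Defs.
From HB Require Import structures.
From mathcomp Require Import all_boot all_order all_algebra.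
From mathcomp Require Import ring zify.
From Stdlib Require Import FunctionalExtensionality.
Set Implicit Arguments. Unset Strict Implicit. Unset Printing Implicit Defensive.
Import GRing.Theory.
Local Open Scope ring_scope.

Section Band.
Variable R : fieldType.
Implicit Types A B M : imx R.

Definition ub (u : nat) M := forall k s, (k + u < s)%N -> M k s = 0.
Definition lb (d : nat) M := forall k s, (s + d < k)%N -> M k s = 0.

Definition appl M (v : nat -> {poly R}) : nat -> {poly R} :=
  fun n => \sum_(m < n.+2) M n m *: v m.

Lemma ub_mono u u' M : ub u M -> (u <= u')%N -> ub u' M.
Proof. move=> H le k s lt; apply: H; apply: leq_ltn_trans lt; by rewrite leq_add2l. Qed.

Lemma imul_ub uA uB A B : ub uA A -> ub uB B -> (uA <= 1)%N -> ub (uA + uB) (imul A B).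
Proof.
move=> hA hB hu k s lt; rewrite /imul big1 // => m _.
case: (leqP (val m) (k + uA)) => hm.
  rewrite hB ?mulr0 //; apply: leq_ltn_trans lt; by rewrite addnA leq_add2r.
by rewrite hA ?mul0r.
Qed.

Lemma imul_lb dA dB A B : lb dA A -> lb dB B -> lb (dA + dB) (imul A B).
Proof.
move=> hA hB k s lt; rewrite /imul big1 // => -[x hx] _ /=.
case: (ltnP (x + dA) k) => hm; first by rewrite hA ?mul0r.
rewrite hB ?mulr0 //; lia.
Qed.

Lemma imul_top uA uB A B k : ub uA A -> ub uB B -> (uA <= 1)%N ->
  imul A B k (k + uA + uB)%N = A k (k + uA)%N * B (k + uA)%N (k + uA + uB)%N.
Proof.
move=> hA hB hu; rewrite /imul.
have hk : (k + uA < k.+2)%N by rewrite -addn2 ltn_add2l; apply: leq_ltn_trans hu _.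
rewrite (bigD1 (Ordinal hk)) //= big1 ?addr0 // => m hm.
have hm' : val m != (k + uA)%N by move: hm; apply: contra => /eqP h; apply/eqP/val_inj.
case: (ltngtP (val m) (k + uA)%N) hm' => // h _.
  by rewrite hB ?mulr0 // ltn_add2r.
by rewrite hA ?mul0r.
Qed.

Lemma sum_widen M (v : nat -> {poly R}) k N : ub 1 M -> (k.+2 <= N)%N ->
  \sum_(m < N) M k m *: v m = \sum_(m < k.+2) M k m *: v m.
Proof.
move=> hM hN; rewrite [RHS](big_ord_widen N (fun m => M k m *: v m) hN).
rewrite [RHS]big_mkcond /=; apply: eq_bigr => m _.
case: ifP => // /negbT; rewrite -leqNgt => h.
by rewrite hM ?scale0r // addn1.
Qed.

Lemma appl_imul uA uB A B v : ub uA A -> ub uB B -> (uA + uB <= 1)%N ->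
  appl (imul A B) v = appl A (appl B v).
Proof.
move=> hA hB hu; apply: functional_extensionality => n; rewrite /appl.
have hA1 : ub 1 A by apply: (ub_mono hA); apply: leq_trans hu; apply: leq_addr.
have hB1 : ub 1 B by apply: (ub_mono hB); apply: leq_trans hu; apply: leq_addl.
have hAB : ub 1 (imul A B).
  exact: (ub_mono (imul_ub hA hB (leq_trans (leq_addr uB uA) hu)) hu).
rewrite -(sum_widen v hAB (leqnSn n.+2)).
under [RHS]eq_bigr => m _.
  rewrite -(sum_widen v hB1 (_ : (m.+2 <= n.+3)%N)); last by rewrite ltnS ltnS; case: m.
  rewrite scaler_sumr.
  under eq_bigr => s _ do rewrite scalerA.
over.
rewrite exchange_big /=; apply: eq_bigr => s _.
by rewrite /imul scaler_suml.
Qed.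

Lemma appl_iid v : appl (iid R) v = v.
Proof.
apply: functional_extensionality => n; rewrite /appl.
rewrite (bigD1 (Ordinal (ltnW (ltnSn n.+1)))) //= /iid eqxx scale1r big1 ?addr0 // => m hm.
rewrite /iid; case: eqP => [h|]; last by rewrite scale0r.
by move: hm; rewrite -h; case/eqP; apply/val_inj.
Qed.

Lemma ub_iid : ub 0 (iid R).
Proof. move=> k s; rewrite addn0 /iid => h; by rewrite (ltn_eqF h). Qed.
Lemma lb_iid : lb 0 (iid R).
Proof. move=> k s; rewrite addn0 /iid => h; by rewrite eq_sym (ltn_eqF h). Qed.

Variable (p : nat) (gam : nat -> R).
Local Notation L := (Lmx p gam).
Local Notation U := (Umx p gam).

Lemma ub_L i : ub 0 (L i).
Proof. move=> k s; rewrite addn0 /Lmx => h; rewrite (gtn_eqF h); case: eqP => // e; by move: h; rewrite e ltnNge leqnSn. Qed.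
Lemma lb_L i : lb 1 (L i).
Proof. move=> k s; rewrite addn1 /Lmx => h; rewrite (ltn_eqF (ltnW h)); case: eqP => // e; by move: h; rewrite e ltnn. Qed.
Lemma top_L i k : L i k k = 1.
Proof. by rewrite /Lmx eqxx. Qed.
Lemma ub_U : ub 1 U.
Proof. move=> k s; rewrite addn1 /Umx => h; rewrite (gtn_eqF (ltnW h)) (gtn_eqF h) //. Qed.
Lemma lb_U : lb 0 U.
Proof. move=> k s; rewrite addn0 /Umx => h; rewrite (ltn_eqF h) (ltn_eqF (leqW h)) //. Qed.
Lemma top_U k : U k (k + 1)%N = 1.
Proof. rewrite /Umx /=. have -> : (k + 1 == k)%N = false by apply/eqP; lia. by rewrite addn1 eqxx. Qed.

Lemma foldL_ub (s : seq nat) B u : ub u B -> (u <= 1)%N -> ub u (foldr (@imul R) B (map L s)).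
Proof. move=> hB hu; elim: s => //= i s IH; exact: (imul_ub (ub_L i) IH). Qed.

Lemma foldL_lb (s : seq nat) B d : lb d B -> lb (d + size s) (foldr (@imul R) B (map L s)).
Proof.
move=> hB; elim: s => [|i s IH] /=; first by rewrite addn0.
by rewrite -addn1 addnA addnC; apply: imul_lb (lb_L i) IH.
Qed.

Lemma foldL_top (s : seq nat) B u k : ub u B -> (u <= 1)%N ->
  foldr (@imul R) B (map L s) k (k + u)%N = B k (k + u)%N.
Proof.
move=> hB hu; elim: s => //= i s IH.
have := imul_top k (ub_L i) (foldL_ub s hB hu) (leq0n 1).
by rewrite !addn0 top_L mul1r IH.
Qed.

Lemma foldL_app (s : seq nat) B u v : ub u B -> (u <= 1)%N ->
  appl (foldr (@imul R) B (map L s)) v = foldr appl (appl B v) (map L s).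
Proof.
move=> hB hu; elim: s => //= i s IH.
by rewrite (appl_imul _ (ub_L i) (foldL_ub s hB hu)) // IH.
Qed.

Definition shp (s1 s2 : seq nat) : imx R := iprod (map L s1 ++ U :: map L s2).

Lemma shp_eq s1 s2 : shp s1 s2 = foldr (@imul R) (imul U (foldr (@imul R) (iid R) (map L s2))) (map L s1).
Proof. by rewrite /shp /iprod foldr_cat. Qed.

Lemma ub_B2 s2 : ub 1 (imul U (foldr (@imul R) (iid R) (map L s2))).
Proof. rewrite -[1%N]addn0; exact: imul_ub ub_U (foldL_ub s2 ub_iid (leq0n 1)) (leqnn 1). Qed.

Lemma shp_ub s1 s2 : ub 1 (shp s1 s2).
Proof. rewrite shp_eq; exact: foldL_ub (ub_B2 s2) (leqnn 1). Qed.

Lemma shp_lb s1 s2 : lb (size s2 + size s1) (shp s1 s2).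
Proof.
rewrite shp_eq; apply: foldL_lb; rewrite -[size s2]add0n.
apply: imul_lb lb_U _; rewrite -[size s2]add0n; exact: foldL_lb lb_iid.
Qed.

Lemma shp_top s1 s2 k : shp s1 s2 k (k + 1)%N = 1.
Proof.
rewrite shp_eq (foldL_top _ _ (ub_B2 s2)) //.
have := imul_top k ub_U (foldL_ub s2 ub_iid (leq0n 1)) (leqnn 1).
rewrite !addn0 => ->.
have := foldL_top s2 (k + 1) ub_iid (leq0n 1); rewrite addn0 => ->.
by rewrite top_U /iid eqxx mulr1.
Qed.

Lemma shp_app s1 s2 v :
  appl (shp s1 s2) v = foldr appl (appl U (foldr appl v (map L s2))) (map L s1).
Proof.
rewrite shp_eq (foldL_app _ _ (ub_B2 s2)) //.
rewrite (appl_imul _ ub_U (foldL_ub s2 ub_iid (leq0n 1))) //.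
by rewrite (foldL_app _ _ ub_iid) // appl_iid.
Qed.

Lemma appl_L i u n : appl (L i) u n =
  u n + (if n is n'.+1 then gam (n' * p.+1 + i + 1)%N *: u n' else 0).
Proof.
rewrite /appl !big_ord_recr /=.
have -> : L i n n.+1 = 0 by apply: (ub_L i); rewrite addn0.
rewrite top_L scale0r addr0 scale1r; case: n => [|n].
  by rewrite big_ord0 add0r addr0.
rewrite big_ord_recr /= big1 ?add0r.
  by rewrite /Lmx (ltn_eqF (ltnSn n)) eqxx addrC.
move=> [m hm] _ /=; rewrite /Lmx.
have -> : (m == n.+1) = false by apply/eqP; lia.
have -> : (n.+1 == m.+1) = false by apply/eqP; lia.
by rewrite scale0r.
Qed.

Lemma appl_U u n : appl U u n = gam (n * p.+1 + 1)%N *: u n + u n.+1.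
Proof.
rewrite /appl !big_ord_recr /= big1 ?add0r.
  rewrite /Umx eqxx (gtn_eqF (ltnSn n)) eqxx scale1r //.
move=> [m hm] _ /=; rewrite /Umx.
have -> : (m == n) = false by apply/eqP; lia.
have -> : (m == n.+1) = false by apply/eqP; lia.
by rewrite scale0r.
Qed.

Lemma appl_J C j v n : appl (Jmx p gam C j) v n =
  C *: v n + appl (shp (iota j.+1 (p - j)) (iota 1 j)) v n.
Proof.
rewrite /appl /Jmx.
under eq_bigr => m _ do rewrite scalerDl.
rewrite big_split /=; congr (_ + _).
rewrite (bigD1 (Ordinal (ltnW (ltnSn n.+1)))) //= eqxx mulr1 big1 ?addr0 // => m hm.
case: eqP => [h|]; last by rewrite mulr0 scale0r.
by move: hm; rewrite -h; case/eqP; apply/val_inj.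
Qed.

Lemma ub_J C j : ub 1 (Jmx p gam C j).
Proof.
move=> k s h; rewrite /Jmx.
have -> : (k == s) = false by apply/eqP; lia.
rewrite mulr0 add0r; exact: (shp_ub _ _ h).
Qed.

Lemma top_J C j k : Jmx p gam C j k k.+1 = 1.
Proof.
rewrite /Jmx (ltn_eqF (ltnSn k)) mulr0 add0r. have := shp_top (iota j.+1 (p - j)) (iota 1 j) k. rewrite addn1. exact.
Qed.
End Band.

Section Func.
Variable R : fieldType.

Lemma size_sum_le (F : nat -> {poly R}) k N :
  (forall m, (m < k)%N -> (size (F m) <= N)%N) -> (size (\sum_(m < k) F m)%R <= N)%N.
Proof.
elim: k => [|k IH] h; first by rewrite big_ord0 size_poly0.
rewrite big_ord_recr /=; apply: leq_trans (size_polyD _ _) _.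
rewrite geq_max IH ?h // => m hm; apply: h; exact: ltnW.
Qed.

Lemma eig_rec (H : imx R) Q n : eigen_seq H Q -> H n n.+1 = 1 ->
  Q n.+1 = 'X * Q n - \sum_(m < n.+1) H n m *: Q m.
Proof.
move=> [_ hQ] h1; have := hQ n; rewrite big_ord_recr /= h1 scale1r => <-.
by rewrite addrC addrK.
Qed.

Lemma eig_unique (H : imx R) Q Q' : (forall n, H n n.+1 = 1) ->
  eigen_seq H Q -> eigen_seq H Q' -> forall n, Q n = Q' n.
Proof.
move=> h1 hQ hQ'.
suff: forall n m, (m <= n)%N -> Q m = Q' m by move=> h n; exact: (h n).
elim=> [|n IH] m hm.
  by move: hm; rewrite leqn0 => /eqP ->; rewrite hQ.1 hQ'.1.
case: (leqP m n) => hmn; first exact: IH.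
have -> : m = n.+1 by apply/eqP; rewrite eqn_leq hm hmn.
rewrite (eig_rec hQ (h1 n)) (eig_rec hQ' (h1 n)) IH //; congr (_ - _).
apply: eq_bigr => -[i hi] _ /=; rewrite IH //.
Qed.

Lemma eig_size (H : imx R) Q : (forall n, H n n.+1 = 1) ->
  eigen_seq H Q -> forall n, size (Q n) = n.+1.
Proof.
move=> h1 hQ.
suff: forall n m, (m <= n)%N -> size (Q m) = m.+1 by move=> h n; exact: (h n).
elim=> [|n IH] m hm.
  by move: hm; rewrite leqn0 => /eqP ->; rewrite hQ.1 size_poly1.
case: (leqP m n) => hmn; first exact: IH.
have -> : m = n.+1 by apply/eqP; rewrite eqn_leq hm hmn.
have hn : Q n != 0 by rewrite -size_poly_eq0 IH.
have hX : size ('X * Q n) = n.+2 by rewrite mulrC size_mulX // IH.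
rewrite (eig_rec hQ (h1 n)) size_polyDl hX // size_polyN ltnS.
have := @size_sum_le (fun m => H n m *: Q m) n.+1 n.+1. move=> hh. apply: hh => i hi; apply: leq_trans (size_scale_leq _ _) _.
by rewrite IH.
Qed.

Lemma lin0 (f : {poly R} -> R) : lin_functional f -> f 0 = 0.
Proof.
move=> hf; have := hf 1 0 0; rewrite scale1r addr0 mul1r => h.
by apply: (addrI (f 0)); rewrite addr0 -h.
Qed.

Lemma linZ (f : {poly R} -> R) c q : lin_functional f -> f (c *: q) = c * f q.
Proof. by move=> hf; have := hf c q 0; rewrite addr0 lin0 // addr0. Qed.
Lemma linD (f : {poly R} -> R) q r : lin_functional f -> f (q + r) = f q + f r.
Proof. by move=> hf; have := hf 1 q r; rewrite scale1r mul1r. Qed.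

Lemma lin_sum (f : {poly R} -> R) (c : nat -> R) (Q : nat -> {poly R}) k :
  lin_functional f -> f (\sum_(m < k) c m *: Q m) = \sum_(m < k) c m * f (Q m).
Proof.
move=> hf; elim: k => [|k IH]; first by rewrite !big_ord0 lin0.
by rewrite !big_ord_recr /= linD // linZ // IH.
Qed.

Lemma span0 (h : {poly R} -> R) (Q : nat -> {poly R}) :
  lin_functional h -> (forall n, size (Q n) = n.+1) -> (forall i, h (Q i) = 0) ->
  forall q, h q = 0.
Proof.
move=> hh hs hQ.
suff: forall N (q : {poly R}), (size q <= N)%N -> h q = 0 by move=> H q; exact: (H _ q (leqnn _)).
elim=> [|N IH] q hq.
  by move: hq; rewrite leqn0 size_poly_eq0 => /eqP ->; rewrite lin0.
case: (leqP (size q) N) => hqN; first exact: IH.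
have hsq : size q = N.+1 by apply/eqP; rewrite eqn_leq hq hqN.
have hl : (Q N)`_N != 0.
  have : lead_coef (Q N) != 0 by rewrite lead_coef_eq0 -size_poly_eq0 hs.
  by rewrite /lead_coef hs.
set c := q`_N / (Q N)`_N.
have -> : q = c *: Q N + (q - c *: Q N) by rewrite addrC subrK.
rewrite hh hQ mulr0 add0r; apply: IH.
apply/leq_sizeP => j hj; rewrite coefB coefZ.
case: (ltngtP j N) hj => //; last first.
  by move=> -> _; rewrite /c divfK // subrr.
move=> hNj _; rewrite !nth_default ?mulr0 ?subrr //.
  by rewrite hs.
by rewrite hsq.
Qed.

Lemma lin_agree (f g : {poly R} -> R) (Q : nat -> {poly R}) :
  lin_functional f -> lin_functional g -> (forall n, size (Q n) = n.+1) ->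
  (forall i, f (Q i) = g (Q i)) -> forall q, f q = g q.
Proof.
move=> hf hg hs hQ q; apply/eqP; rewrite -subr_eq0; apply/eqP.
apply: (span0 (h := fun q => f q - g q)) hs _ q.
  by move=> c x y; rewrite hf hg; ring.
by move=> i; rewrite hQ subrr.
Qed.
End Func.

Section Prec.
Variable R : fieldType.
Variables (p : nat) (a : imx R).

Lemma nth_Pl n i : (Pl p a n)`_i = if (i <= n)%N then Prec p a (n - i) else 0.
Proof.
elim: n i => [|n IH] [|i] //=; by rewrite nth_nil.

Qed.

Lemma eigP0 : (forall n, a n n.+1 = 1) -> (forall n m, (m + p < n)%N -> a n m = 0) ->
  eigen_seq a (Prec p a).
Proof.
move=> h1 h0; split=> // n.
rewrite !big_ord_recr /= h1 scale1r.
have -> : Prec p a n.+1 = ('X - (a n n)%:P) * Prec p a n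
   - \sum_(1 <= i < p.+1) a n (n - i)%N *: (Pl p a n)`_i by [].
set G := fun i => a n (n - i)%N *: (Pl p a n)`_i.
have hS : \sum_(i < n) a n i *: Prec p a i = \sum_(1 <= i < n.+1) G i.
  rewrite -(big_mkord xpredT (fun i => a n i *: Prec p a i)) big_nat_rev big_add1 /=.
  apply: eq_big_nat => i /andP [_ hi]; rewrite /G nth_Pl hi add0n subnS /=.
  congr (_ *: Prec p a _); lia.
have hT : \sum_(1 <= i < p.+1) G i = \sum_(1 <= i < n.+1) G i.
  have z1 : \sum_(p.+1 <= i < (n + p).+1) G i = 0.
    rewrite big_nat_cond big1 // => i /andP [/andP [h1' h2'] _].
    rewrite /G nth_Pl; case: leqP => hin; last by rewrite scaler0.
    by rewrite h0 ?scale0r //; lia.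
  have z2 : \sum_(n.+1 <= i < (n + p).+1) G i = 0.
    rewrite big_nat_cond big1 // => i /andP [/andP [h1' h2'] _].
    by rewrite /G nth_Pl (leqNgt i n) h1' scaler0.
  have c1 : \sum_(1 <= i < (n + p).+1) G i = \sum_(1 <= i < p.+1) G i + \sum_(p.+1 <= i < (n + p).+1) G i.
    by apply: big_cat_nat; lia.
  have c2 : \sum_(1 <= i < (n + p).+1) G i = \sum_(1 <= i < n.+1) G i + \sum_(n.+1 <= i < (n + p).+1) G i.
    by apply: big_cat_nat; lia.
  by move: c1 c2; rewrite z1 z2 !addr0 => <- <-.
rewrite hS -hT /G; set T := \sum_(1 <= i < p.+1) _.
rewrite mulrBl -mul_polyC; ring.
Qed.
End Prec.

Section Misc.
Variable R : fieldType.

Lemma appl_mul (M : imx R) (v : nat -> {poly R}) (q : {poly R}) n :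
  appl M (fun m => q * v m) n = q * appl M v n.
Proof.
rewrite /appl mulr_sumr; apply: eq_bigr => m _; by rewrite -!mul_polyC mulrCA.
Qed.

Lemma sum_delta1 (F : nat -> R) N n :
  \sum_(m < N) F m * ((m : nat) == n)%:R = if (n < N)%N then F n else 0.
Proof.
case: ifP => hn.
  rewrite (bigD1 (Ordinal hn)) //= eqxx mulr1 big1 ?addr0 // => m hm.
  case: eqP => [h|]; last by rewrite mulr0.
  by exfalso; move/eqP: hm; apply; apply: val_inj.
rewrite big1 // => m _; case: eqP => [h|]; last by rewrite mulr0.
by move: hn; rewrite -h ltn_ord.
Qed.

Lemma sum_delta2 (F : nat -> R) N n k :
  \sum_(s < N) F s * (k == (n + s)%N)%:R =
    if (n <= k)%N && (k - n < N)%N then F (k - n)%N else 0.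
Proof.
case: (leqP n k) => hnk /=.
  rewrite -sum_delta1; apply: eq_bigr => s _; congr (_ * _%:R); apply/eqP/eqP; lia.
rewrite big1 // => s _; have -> : (k == (n + s)%N) = false by apply/eqP; lia.
by rewrite mulr0.
Qed.

Lemma lin_zmC (f : {poly R} -> R) C : lin_functional f -> lin_functional (zmC C f).
Proof.
move=> hf c x y; rewrite /zmC.
have -> : ('X - C%:P) * (c *: x + y) = c *: (('X - C%:P) * x) + ('X - C%:P) * y.
  by rewrite -!mul_polyC; ring.
exact: hf.
Qed.
End Misc.
Theorem lemma3 (R : fieldType) (p : nat) (a : imx R) (C : R) (gam : nat -> R)
  (P : nat -> nat -> {poly R}) (Lf : nat -> nat -> {poly R} -> R) :
  (0 < p)%N ->
  (* J = (a_{n,m}) *)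
  (forall n, a n n.+1 = 1) ->
  (forall n m, (n.+1 < m)%N -> a n m = 0) ->
  (forall n m, (m + p < n)%N -> a n m = 0) ->
  (forall n, a (n + p)%N n != 0) ->
  (* P_n(C) <> 0 for n >= 1 *)
  (forall n, (1 <= n)%N -> (Prec p a n).[C] != 0) ->
  (* Darboux factorization J - C I = L^(1) ... L^(p) U *)
  (forall j k, (1 <= j <= p)%N -> gam (k * p.+1 + j + 1)%N != 0) ->
  (forall k s, a k s - C * (k == s)%:R
     = iprod (Lrange p gam 1 p ++ [:: Umx p gam]) k s) ->
  (* P^(0) = P, P^(j) the polynomial eigenvector of J^(j) *)
  (forall n, P 0%N n = Prec p a n) ->
  (forall j, (1 <= j <= p)%N -> eigen_seq (Jmx p gam C j) (P j)) ->
  (* L^(j)_n dual sequence of P^(j)_n *)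
  (forall j, (j <= p)%N -> dual_seq (P j) (Lf j)) ->
  (forall j n, (j < p)%N ->
     (forall q, Lf j.+1 n q = Lf j n q + gam (n * p.+1 + j + 2)%N * Lf j n.+1 q)
     /\ (forall q, zmC C (Lf j n) q =
           (if n is n'.+1 then Lf j.+1 n' q else 0)
           + \sum_(s < p) Gmx p gam j (n + s)%N n * Lf j.+1 (n + s)%N q))
  /\ (forall n q, zmC C (Lf 0%N n) q =
        (if n is n'.+1 then Lf p n' q else 0)
        - (Prec p a n.+1).[C] / (Prec p a n).[C] * Lf p n q).
Proof.
Proof.
move=> hp h1 hup hlow hdiag hPC hgam hfac hP0 hPj hdual.
have eig : forall j, (j <= p)%N -> eigen_seq (Jmx p gam C j) (P j).
  move=> [|j] hj; last by apply: hPj.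
  have HJ0 : forall k s, Jmx p gam C 0 k s = a k s.
    move=> k s; rewrite /Jmx subn0 /= -hfac; by rewrite addrC subrK.
  have e := eigP0 h1 hlow.
  split; first by rewrite hP0 e.1.
  move=> n; under eq_bigr => m _ do rewrite HJ0 hP0.
  by rewrite hP0 e.2.
have hsz : forall j, (j <= p)%N -> forall n, size (P j n) = n.+1.
  move=> j hj; exact: (eig_size (top_J p gam C j) (eig j hj)).
have hB : forall j, (j < p)%N ->
    appl (shp p gam (iota j.+2 (p - j.+1)) (iota 1 j)) (appl (Lmx p gam j.+1) (P j.+1))
    = fun n => ('X - C%:P) * P j.+1 n.
  move=> j hj; apply: functional_extensionality => n.
  have -> : appl (shp p gam (iota j.+2 (p - j.+1)) (iota 1 j)) (appl (Lmx p gam j.+1) (P j.+1))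
        = appl (shp p gam (iota j.+2 (p - j.+1)) (iota 1 j.+1)) (P j.+1).
    have -> : iota 1 j.+1 = iota 1 j ++ [:: j.+1] by have := iotaD 1 j 1; rewrite addn1 add1n.
    by rewrite !shp_app map_cat foldr_cat.
  have := (eig j.+1 hj).2 n; rewrite -/(appl _ _ n) appl_J => e.
  rewrite mulrBl -e mul_polyC; by rewrite addrC addKr.
have step1 : forall j, (j < p)%N -> P j = appl (Lmx p gam j.+1) (P j.+1).
  move=> j hj; apply: functional_extensionality.
  apply: (eig_unique (top_J p gam C j) (eig j (ltnW hj))).
  split; first by rewrite appl_L addr0 (eig j.+1 hj).1.
  move=> n; rewrite -/(appl _ _ n) appl_J -(subnSK hj).
  rewrite (_ : shp p gam (iota j.+1 (p - j.+1).+1) (iota 1 j)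
     = imul (Lmx p gam j.+1) (shp p gam (iota j.+2 (p - j.+1)) (iota 1 j))) //.
  rewrite (appl_imul _ (ub_L p gam j.+1) (shp_ub p gam _ _)) // hB // appl_mul.
  rewrite -mul_polyC; ring.
have step3 : forall t, (t <= p)%N ->
    P (p - t)%N = foldr (@appl R) (P p) (map (Lmx p gam) (iota (p - t).+1 t)).
  elim=> [|t IH] ht; first by rewrite subn0.
  have hj : (p - t.+1 < p)%N by lia.
  have e : (p - t.+1).+1 = (p - t)%N by lia.
  by rewrite (step1 _ hj) e IH ?(ltnW ht).
have hU : forall n, appl (Umx p gam) (P 0%N) n = ('X - C%:P) * P p n.
  move=> n; have e := (eig p (leqnn p)).2 n.
  rewrite -/(appl _ _ n) appl_J subnn shp_app /= in e.
  have e3 := step3 p (leqnn p); rewrite subnn in e3; rewrite -e3 in e.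
  by rewrite mulrBl -e mul_polyC addrC addKr.
have hg : forall n, gam (n * p.+1 + 1)%N = - ((Prec p a n.+1).[C] / (Prec p a n).[C]).
  move=> n; have := congr1 (fun q => q.[C]) (hU n).
  rewrite appl_U !hP0 /= hornerD hornerZ hornerM hornerXsubC subrr mul0r => e.
  have hn : (Prec p a n).[C] != 0.
    case: n {e} => [|n]; last exact: hPC.
    by rewrite /Prec /= hornerC oner_neq0.
  have -> : (Prec p a n.+1).[C] = - (gam (n * p.+1 + 1)%N * (Prec p a n).[C]).
    by apply/eqP; rewrite -addr_eq0 addrC e.
  by rewrite mulNr opprK mulfK.
split.
  move=> j n hj; have hfj := hdual j (ltnW hj); have hfj1 := hdual j.+1 hj.
  split.
    apply: (@lin_agree R _ _ (P j)); first exact: (hfj1 n).1.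
    - by move=> c x y; rewrite (hfj n).1 (hfj n.+1).1; ring.
    - exact: hsz (ltnW hj).
    move=> i.
    rewrite {1}(step1 j hj) appl_L !(hfj _).2.
    case: i => [|i] /=.
      by rewrite addr0 (hfj1 n).2 mulr0 addr0.
    have hl := (hfj1 n).1; rewrite (linD _ _ hl) (linZ _ _ hl) !(hfj1 n).2 eqSS.
    case: (eqVneq i n) => [->|hne]; last by rewrite !mulr0.
    have -> : (n * p.+1 + j.+1 + 1 = n * p.+1 + j + 2)%N by lia.
    by [].
  apply: (@lin_agree R _ _ (P j.+1)); first exact: lin_zmC (hfj n).1.
  - move=> c x y; case: n {hfj} => [|n'] /=;
    under eq_bigr => s _ do rewrite (hfj1 _).1 mulrDr mulrCA;
    rewrite big_split /= -mulr_sumr ?(hfj1 n').1; ring.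
  - exact: hsz hj.
  move=> k.
  have hG : appl (Gmx p gam j) (P j) k = ('X - C%:P) * P j.+1 k.
    by rewrite (step1 j hj); exact: (congr1 (fun f => f k) (hB j hj)).
  rewrite /zmC -hG /appl (lin_sum _ _ _ (hfj n).1).
  under eq_bigr => m _ do rewrite (hfj n).2.
  rewrite sum_delta1.
  under eq_bigr => s _ do rewrite (hfj1 _).2.
  rewrite (sum_delta2 (fun s => Gmx p gam j (n + s)%N n)).
  have Gtop : Gmx p gam j k k.+1 = 1.
    by have := shp_top p gam (iota j.+2 (p - j.+1)) (iota 1 j) k; rewrite addn1.
  have Glb : lb (j + (p - j.+1)) (Gmx p gam j).
    by have := @shp_lb _ p gam (iota j.+2 (p - j.+1)) (iota 1 j); rewrite !size_iota.
  case: n {hG} => [|n] /=.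
    rewrite add0r subn0 add0n; case: (ltnP k p) => hk //.
    by rewrite Glb //; lia.
  rewrite (hfj1 n).2.
  case: (leqP n.+1 k) => hnk.
    have -> : (n.+1 < k.+2)%N by lia.
    have -> : (k == n) = false by apply/eqP; lia.
    rewrite add0r /=; case: (ltnP (k - n.+1) p) => hk.
      by rewrite subnKC.
    by rewrite Glb //; lia.
  rewrite /= addr0.
  case: (eqVneq k n) => [<-|hne].
    by rewrite ltnSn Gtop.
  have -> : (n.+1 < k.+2)%N = false.
    apply/negbTE; rewrite -leqNgt; move: hne => /eqP; lia.
  by [].
move=> n; apply: (@lin_agree R _ _ (P p)); first exact: lin_zmC (hdual 0%N (leq0n p) n).1.
- move=> c x y; have hdp := hdual p (leqnn p); rewrite (hdp n).1.
  case: n => [|n'] /=; rewrite ?(hdp n').1; move: (_ / _) => r; ring.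
- exact: hsz (leqnn p).
move=> k; have hd0 := hdual 0%N (leq0n p); have hdp := hdual p (leqnn p).
rewrite /zmC -hU appl_U (hd0 n).1 !(hd0 n).2 !(hdp _).2 hg.
case: n => [|n'] /=.
  case: (eqVneq k 0%N) => [->|hne] /=; move: (_ / _) => r; ring.
rewrite (hdp n').2.
case: (eqVneq k n'.+1) => [->|hne] /=.
  have -> : (n'.+2 == n'.+1) = false by apply/eqP; lia.
  rewrite (gtn_eqF (ltnSn n')); move: (_ / _) => r; rewrite /=; ring.
rewrite eqSS; case: (eqVneq k n') => [->|hne2] /=; move: (_ / _) => r; ring.
Qed.
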